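(* Let $D=\{d_1<d_2<d_3<\dotsb\}$ be an infinite set of positive integers. If there exist a real number $\delta>0$ and a positive integer $N$ such that $d_{n+1}\geq(3+\delta)d_n$ for all $n\geq N$, then $D$ is not $2$-accessible.
   Context: An $r$-coloring of a set $A$ is a function $\chi:A\to\{1,\dots,r\}$. For $D\subseteq\mathbb{N}=\{1,2,3,\dots\}$, a $k$-term $D$-diffsequence is a sequence of integers $x_1,\dots,x_k$ with $x_{i+1}-x_i\in D$ for all $1\le i\le k-1$. A set $D\subseteq\mathbb{N}$ is $r$-accessible if for every $r$-coloring of $\mathbb{N}$ and every $k\ge1$ there is a monochromatic $k$-term $D$-diffsequence in $\mathbb{N}$. *)

(* Defs.v *)
From Stdlib Require Import Reals Arith.

Definition is_diffseq (D : nat -> Prop) (k : nat) (x : nat -> nat) : Prop :=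
  (forall i, i < k -> 1 <= x i) /\
  (forall i, i + 1 < k -> exists d, D d /\ x (i + 1) = x i + d).

Definition is_coloring (r : nat) (chi : nat -> nat) : Prop :=
  forall n, 1 <= n -> 1 <= chi n <= r.

Definition monochromatic (chi : nat -> nat) (k : nat) (x : nat -> nat) : Prop :=
  forall i j, i < k -> j < k -> chi (x i) = chi (x j).

Definition accessible (r : nat) (D : nat -> Prop) : Prop :=
  forall chi, is_coloring r chi ->
  forall k, 1 <= k -> exists x, is_diffseq D k x /\ monochromatic chi k x.

(* Main.v *)
Require Import Defs.
From Stdlib Require Import Reals Lra Lia ZArith.
Open Scope R_scope.
Lemma frac_step y m t e : 0 < e -> 2 * IZR m + e <= t <= 2 * IZR m + 1 ->
  Z.even (Int_part (y + t)) = Z.even (Int_part y) ->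
  frac_part (y + t) >= frac_part y + e.
Proof.
  intros He Ht Hev.
  pose proof (Rplus_Int_part_frac_part y) as Hy.
  pose proof (base_fp y) as Hf.
  set (z := Int_part y) in *. set (f := frac_part y) in *.
  destruct (Rlt_or_le (f + (t - 2 * IZR m)) 1) as [H|H].
  - destruct (Int_part_frac_part_spec (y + t) (z + 2 * m)%Z (f + (t - 2 * IZR m))) as [_ H2].
    + lra.
    + rewrite plus_IZR, mult_IZR. simpl (IZR 2). lra.
    + rewrite <- H2. lra.
  - destruct (Int_part_frac_part_spec (y + t) (z + 2 * m + 1)%Z (f + (t - 2 * IZR m) - 1)) as [H1 _].
    + lra.
    + rewrite !plus_IZR, mult_IZR. simpl (IZR 2). lra.
    + exfalso. rewrite <- H1 in Hev. rewrite !Z.even_add in Hev.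
      rewrite Z.even_mul in Hev. simpl in Hev.
      destruct (Z.even z); simpl in Hev; discriminate.
Qed.

Lemma step_lemma a b Dv e : 0 < Dv -> (b - a) * Dv >= 3 - e ->
  a <= (2 * IZR (up ((a * Dv - e) / 2)) + e) / Dv /\
  (2 * IZR (up ((a * Dv - e) / 2)) + 1) / Dv <= b.
Proof.
  intros HD Hl. destruct (archimed ((a * Dv - e) / 2)) as [H1 H2].
  set (m := IZR (up ((a * Dv - e) / 2))) in *.
  split.
  - apply (Rmult_le_reg_r Dv); auto. unfold Rdiv. rewrite Rmult_assoc, Rinv_l by lra. lra.
  - apply (Rmult_le_reg_r Dv); auto. unfold Rdiv. rewrite Rmult_assoc, Rinv_l by lra. lra.
Qed.

Fixpoint Aseq (D : nat -> R) (e a0 : R) (N : nat) (j : nat) : R :=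
  match j with
  | O => a0
  | S j' => (2 * IZR (up ((Aseq D e a0 N j' * D (N + j)%nat - e) / 2)) + e) / D (N + j)%nat
  end.

Definition Bseq (D : nat -> R) (e a0 b0 : R) (N : nat) (j : nat) : R :=
  match j with
  | O => b0
  | S _ => Aseq D e a0 N j + (1 - e) / D (N + j)%nat
  end.

Lemma nest D e a0 b0 N : (forall n, 0 < D n) -> e <= 1 -> e < 3 ->
  (forall j, (Bseq D e a0 b0 N j - Aseq D e a0 N j) * D (N + S j)%nat >= 3 - e) ->
  forall j, Aseq D e a0 N j <= Aseq D e a0 N (S j) /\
            Bseq D e a0 b0 N (S j) <= Bseq D e a0 b0 N j /\
            Aseq D e a0 N j <= Bseq D e a0 b0 N j.
Proof.
  intros HD He1 He3 Hl j.
  pose proof (HD (N + S j)%nat) as HDj.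
  destruct (step_lemma _ _ _ e HDj (Hl j)) as [S1 S2].
  assert (EA : Aseq D e a0 N (S j) =
     (2 * IZR (up ((Aseq D e a0 N j * D (N + S j)%nat - e) / 2)) + e) / D (N + S j)%nat) by reflexivity.
  assert (EB : Bseq D e a0 b0 N (S j) =
     (2 * IZR (up ((Aseq D e a0 N j * D (N + S j)%nat - e) / 2)) + 1) / D (N + S j)%nat).
  { unfold Bseq. rewrite EA. field. lra. }
  rewrite EA, EB. split; [exact S1|]. split; [exact S2|].
  assert (Hlj := Hl j).
  assert (0 < (Bseq D e a0 b0 N j - Aseq D e a0 N j) * D (N + S j)%nat) by lra.
  assert (0 < Bseq D e a0 b0 N j - Aseq D e a0 N j).
  { destruct (Rle_or_lt (Bseq D e a0 b0 N j - Aseq D e a0 N j) 0); auto.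
    exfalso. nra. }
  lra.
Qed.

Lemma nest_mono D e a0 b0 N : (forall n, 0 < D n) -> e <= 1 -> e < 3 ->
  (forall j, (Bseq D e a0 b0 N j - Aseq D e a0 N j) * D (N + S j)%nat >= 3 - e) ->
  forall i j, (i <= j)%nat -> Aseq D e a0 N i <= Aseq D e a0 N j /\
            Bseq D e a0 b0 N j <= Bseq D e a0 b0 N i.
Proof.
  intros HD He1 He3 Hl i j Hij. induction Hij.
  - lra.
  - destruct (nest D e a0 b0 N HD He1 He3 Hl m) as [H1 [H2 _]]. lra.
Qed.

Lemma nest_point D e a0 b0 N : (forall n, 0 < D n) -> e <= 1 -> e < 3 ->
  (forall j, (Bseq D e a0 b0 N j - Aseq D e a0 N j) * D (N + S j)%nat >= 3 - e) ->
  exists beta, forall j, Aseq D e a0 N j <= beta <= Bseq D e a0 b0 N j.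
Proof.
  intros HD He1 He3 Hl.
  assert (Hub : forall i j, Aseq D e a0 N i <= Bseq D e a0 b0 N j).
  { intros i j. destruct (Nat.le_ge_cases i j) as [H|H].
    - destruct (nest_mono D e a0 b0 N HD He1 He3 Hl i j H) as [H1 _].
      destruct (nest D e a0 b0 N HD He1 He3 Hl j) as [_ [_ H3]]. lra.
    - destruct (nest_mono D e a0 b0 N HD He1 He3 Hl j i H) as [_ H1].
      destruct (nest D e a0 b0 N HD He1 He3 Hl i) as [_ [_ H3]]. lra. }
  destruct (completeness (fun x => exists i, x = Aseq D e a0 N i)) as [beta [Hb1 Hb2]].
  - exists (Bseq D e a0 b0 N 0). intros x [i ->]. apply Hub.
  - exists (Aseq D e a0 N 0). exists 0%nat. reflexivity.
  - exists beta. intros j. split.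
    + apply Hb1. exists j. reflexivity.
    + apply Hb2. intros x [i ->]. apply Hub.
Qed.

Lemma d_mono (d : nat -> nat) : (forall n, (d n < d (S n))%nat) ->
  forall i j, (i <= j)%nat -> (d i <= d j)%nat.
Proof. intros H i j Hij. induction Hij; [lia|]. specialize (H m). lia. Qed.

Lemma exists_beta (d : nat -> nat)
  (Hpos : (1 <= d 0)%nat)
  (Hinc : forall n, (d n < d (S n))%nat)
  (delta : R) (Hdelta : (0 < delta)%R) (N : nat)
  (Hgrowth : forall n, (N <= n)%nat -> (INR (d (S n)) >= (3 + delta) * INR (d n))%R) :
  exists e beta, 0 < e /\ forall n, exists m : Z,
     2 * IZR m + e <= beta * INR (d n) <= 2 * IZR m + 1.
Proof.
  set (D := fun n => INR (d n)).
  assert (HD : forall n, 0 < D n).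
  { intros n. unfold D. apply lt_0_INR. pose proof (d_mono d Hinc 0 n). lia. }
  assert (HD0 : forall n, D 0%nat <= D n).
  { intros n. unfold D. apply le_INR. apply d_mono; auto; lia. }
  assert (HDN : forall n, (n <= N)%nat -> D n <= D N).
  { intros n Hn. unfold D. apply le_INR. apply d_mono; auto. }
  pose proof (HD 0%nat) as P0. pose proof (HD N) as PN. pose proof (HD0 N) as P0N.
  set (P := (3 + delta) * (2 + delta) * D N).
  assert (PP : 0 < P) by (unfold P; apply Rmult_lt_0_compat; [nra|lra]).
  set (e := delta * D 0%nat / P).
  assert (EP : e * P = delta * D 0%nat) by (unfold e; field; lra).
  assert (He0 : 0 < e) by (unfold e; apply Rdiv_lt_0_compat; nra).
  assert (He2 : e * (2 + delta) <= delta).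
  { unfold P in EP.
    assert (Q1 : (e * (2 + delta) * (3 + delta)) * D N <= delta * D N) by nra.
    assert (Q2 : e * (2 + delta) * (3 + delta) <= delta).
    { apply (Rmult_le_reg_r (D N)); lra. }
    nra. }
  assert (He1 : e < 1) by nra.
  assert (He3 : e * (3 + delta) * D N <= delta * D 0%nat).
  { unfold P in EP. assert (0 <= e * (3 + delta) * D N) by (apply Rmult_le_pos; nra). nra. }
  set (a0 := e / D 0%nat). set (b0 := 1 / D N).
  assert (A0 : a0 * D 0%nat = e) by (unfold a0; field; lra).
  assert (B0 : b0 * D N = 1) by (unfold b0; field; lra).
  assert (Hl : forall j, (Bseq D e a0 b0 N j - Aseq D e a0 N j) * D (N + S j)%nat >= 3 - e).
  { intros [|j].
    - simpl. rewrite Nat.add_1_r. assert (G := Hgrowth N (le_n _)). fold (D (S N)) in G. fold (D N) in G.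
      assert (a0pos : 0 < a0) by (unfold a0; apply Rdiv_lt_0_compat; lra).
      assert (b0pos : 0 < b0) by (unfold b0; apply Rdiv_lt_0_compat; lra).
      assert (K : a0 * (3 + delta) <= delta * b0).
      { apply (Rmult_le_reg_r (D 0%nat * D N)); [nra|].
        replace (a0 * (3 + delta) * (D 0%nat * D N)) with ((a0 * D 0%nat) * (3 + delta) * D N) by ring.
        replace (delta * b0 * (D 0%nat * D N)) with (delta * D 0%nat * (b0 * D N)) by ring.
        rewrite A0, B0. lra. }
      assert (K2 : (b0 - a0) * (3 + delta) >= 3 * b0) by nra.
      assert (K3 : (b0 - a0) * D (S N) >= (b0 - a0) * ((3 + delta) * D N)).
      { apply Rle_ge, Rmult_le_compat_l; nra. }
      nra.
    - unfold Bseq. 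
      replace (Aseq D e a0 N (S j) + (1 - e) / D (N + S j)%nat - Aseq D e a0 N (S j))
        with ((1 - e) / D (N + S j)%nat) by ring.
      replace (N + S (S j))%nat with (S (N + S j)) by lia.
      assert (G := Hgrowth (N + S j)%nat ltac:(lia)). fold (D (S (N + S j))) in G. fold (D (N + S j)%nat) in G.
      pose proof (HD (N + S j)%nat).
      set (u := (1 - e) / D (N + S j)%nat).
      assert (U : u * D (N + S j)%nat = 1 - e) by (unfold u; field; lra).
      assert (u0 : 0 <= u) by (unfold u; apply Rmult_le_pos; [lra| apply Rlt_le, Rinv_0_lt_compat; lra]).
      assert (u * D (S (N + S j)) >= u * ((3 + delta) * D (N + S j)%nat)).
      { apply Rle_ge, Rmult_le_compat_l; lra. }
      replace (u * ((3 + delta) * D (N + S j)%nat)) with ((3 + delta) * (u * D (N + S j)%nat)) in H0 by ring.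
      rewrite U in H0. fold u. nra. }
  destruct (nest_point D e a0 b0 N HD ltac:(lra) ltac:(lra) Hl) as [beta Hb].
  exists e, beta. split; [exact He0|]. intros n.
  destruct (Nat.le_gt_cases n N) as [Hn|Hn].
  - exists 0%Z. simpl (IZR 0). specialize (Hb 0%nat). simpl in Hb. fold b0 in Hb. fold a0 in Hb.
    pose proof (HD0 n). pose proof (HDN n Hn). pose proof (HD n). fold (D n).
    assert (a0 >= 0) by (unfold a0; apply Rle_ge, Rmult_le_pos; [lra| apply Rlt_le, Rinv_0_lt_compat; lra]).
    assert (beta * D n >= a0 * D n) by (apply Rle_ge, Rmult_le_compat_r; lra).
    assert (a0 * D n >= a0 * D 0%nat) by (apply Rle_ge, Rmult_le_compat_l; lra).
    assert (beta * D n <= b0 * D n) by (apply Rmult_le_compat_r; lra).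
    assert (b0 * D n <= b0 * D N) by (apply Rmult_le_compat_l; lra).
    lra.
  - destruct n as [|n]; [lia|].
    set (j := (n - N)%nat).
    assert (Ej : S n = (N + S j)%nat) by (unfold j; lia).
    exists (up ((Aseq D e a0 N j * D (N + S j)%nat - e) / 2)).
    specialize (Hb (S j)). fold (D (S n)). rewrite Ej.
    pose proof (HD (N + S j)%nat).
    unfold Bseq in Hb. simpl Aseq in Hb.
    set (m := IZR (up ((Aseq D e a0 N j * D (N + S j)%nat - e) / 2))) in *.
    set (Dv := D (N + S j)%nat) in *.
    assert (E1 : (2 * m + e) / Dv * Dv = 2 * m + e) by (field; lra).
    assert (E2 : ((2 * m + e) / Dv + (1 - e) / Dv) * Dv = 2 * m + 1) by (field; lra).
    split; nra.
Qed.

Close Scope R_scope.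

Theorem mainTheorem2 (d : nat -> nat)
  (Hpos : 1 <= d 0)
  (Hinc : forall n, d n < d (S n))
  (delta : R) (Hdelta : (0 < delta)%R) (N : nat)
  (Hgrowth : forall n, N <= n -> (INR (d (S n)) >= (3 + delta) * INR (d n))%R) :
  ~ accessible 2 (fun m => exists n, d n = m).
Proof.
  intros Hacc.
  destruct (exists_beta d Hpos Hinc delta Hdelta N Hgrowth) as [e [beta [He Hb]]].
  set (chi := fun x : nat => if Z.even (Int_part (beta * INR x)) then 1 else 2).
  assert (Hchi : is_coloring 2 chi) by (intros n _; unfold chi; destruct Z.even; lia).
  set (K := Z.to_nat (up (/ e))).
  destruct (Hacc chi Hchi (K + 2) ltac:(lia)) as [x [[Hx1 Hx2] Hmono]].
  assert (Hind : forall i, i < K + 2 -> (frac_part (beta * INR (x i)) >= INR i * e)%R).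
  { induction i; intros Hi.
    - simpl. rewrite Rmult_0_l. apply base_fp.
    - destruct (Hx2 i ltac:(lia)) as [dd [[n Hn] Hxi]]. rewrite Nat.add_1_r in Hxi.
      rewrite <- Hn in Hxi.
      destruct (Hb n) as [m Hm].
      assert (Hev : Z.even (Int_part (beta * INR (x i) + beta * INR (d n)))
                    = Z.even (Int_part (beta * INR (x i)))).
      { pose proof (Hmono (S i) i Hi ltac:(lia)) as Hc. unfold chi in Hc.
        rewrite Hxi, plus_INR, Rmult_plus_distr_l in Hc.
        destruct (Z.even (Int_part (beta * INR (x i) + beta * INR (d n))));
        destruct (Z.even (Int_part (beta * INR (x i)))); congruence. }
      pose proof (frac_step _ _ _ _ He Hm Hev) as Hs.
      rewrite Hxi, plus_INR, Rmult_plus_distr_l, S_INR.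
      specialize (IHi ltac:(lia)). lra. }
  specialize (Hind (K + 1) ltac:(lia)).
  pose proof (base_fp (beta * INR (x (K + 1)))) as Hf.
  destruct (archimed (/ e)) as [Ha _].
  assert (Hie : (0 < / e)%R) by (apply Rinv_0_lt_compat; lra).
  assert (Hup : (0 <= up (/ e))%Z) by (apply le_IZR; lra).
  assert (HK : INR K = IZR (up (/ e))) by (unfold K; rewrite INR_IZR_INZ, Z2Nat.id; auto).
  rewrite plus_INR, HK in Hind. simpl (INR 1) in Hind.
  assert (/ e * e = 1)%R by (field; lra).
  assert (IZR (up (/ e)) * e > / e * e)%R by (apply Rmult_gt_compat_r; lra).
  nra.
Qed.
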